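(* Let $\mathcal{X}$ be a finite set, $\pi$ a probability mass function on $\mathcal{X}$ with full support, and let a group $\mathcal{G}$ act on $\mathcal{X}$ with Gibbs, Metropolis–Hastings and Barker orbit kernels $G$, $M$, $B$. Let $\mathbf{G}=\{Q\in\mathcal{S}(\pi):GQG=Q\}$. For every $P\in\mathcal{S}(\pi)$ and $Q\in\mathbf{G}$, $D^\pi_{KL}(P\|Q)\ge D^\pi_{KL}(PM\|Q)$, $D^\pi_{KL}(P\|Q)\ge D^\pi_{KL}(PB\|Q)$, $D^\pi_{KL}(P\|Q)\ge D^\pi_{KL}(MP\|Q)$ and $D^\pi_{KL}(P\|Q)\ge D^\pi_{KL}(BP\|Q)$.
   Context: $\mathcal{S}(\pi)$ is the set of transition matrices $P$ with $\pi P=\pi$. $D^\pi_{KL}(P\|Q)=\sum_{x,y}\pi(x)P(x,y)\log\frac{P(x,y)}{Q(x,y)}$ with convention $0\log(0/a)=0$. With $\mathcal{O}(x)$ the orbit of $x$: $G(x,y)=\pi(y)/\pi(\mathcal{O}(x))$ for $y\in\mathcal{O}(x)$, else $0$; $M(x,y)=\frac{1}{|\mathcal{O}(x)|-1}\min\{1,\pi(y)/\pi(x)\}$ for $y\in\mathcal{O}(x)\setminus\{x\}$, $0$ off the orbit, $M(x,x)=1-\sum_{y\ne x}M(x,y)$; $B$ is the same with acceptance $\pi(y)/(\pi(x)+\pi(y))$. *)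

(* Defs.v *)
From HB Require Import structures.
From mathcomp Require Import all_boot all_order all_algebra.
From mathcomp Require Import boolp classical_sets reals ereal exp.
Set Implicit Arguments. Unset Strict Implicit. Unset Printing Implicit Defensive.
Import Order.TTheory GRing.Theory Num.Theory.
Local Open Scope ring_scope.

Section Kernels.
Variables (R : realType) (X : finType).

Definition kmul (P Q : X -> X -> R) : X -> X -> R :=
  fun x y => \sum_(z : X) P x z * Q z y.

Definition stochastic (P : X -> X -> R) : Prop :=
  (forall x y, 0 <= P x y) /\ (forall x, \sum_(y : X) P x y = 1).

Definition Spi (pi : X -> R) (P : X -> X -> R) : Prop :=
  stochastic P /\ (forall y, \sum_(x : X) pi x * P x y = pi y).

Definition KLpi (pi : X -> R) (P Q : X -> X -> R) : \bar R :=
  (\sum_(x : X) \sum_(y : X)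
     (if (pi x * P x y == 0)%R then 0%E
      else if (Q x y == 0)%R then +oo%E
      else ((pi x * P x y) * ln (P x y / Q x y))%:E))%E.

End Kernels.

Section Orbits.
Variables (R : realType) (X : finType) (gT : groupType).
Variable act : gT -> X -> X.

Definition is_action : Prop :=
  (forall x, act 1%g x = x) /\ (forall g h x, act (g * h)%g x = act g (act h x)).

Definition orbitS (x : X) : {set X} := [set y | `[< exists g : gT, act g x = y >]].

Variable pi : X -> R.

Definition Gker : X -> X -> R := fun x y =>
  if y \in orbitS x then pi y / (\sum_(z in orbitS x) pi z) else 0.

(* off-diagonal entries of a Metropolis-type orbit kernel with acceptance a *)
Definition offker (a : X -> X -> R) : X -> X -> R := fun x y =>
  if (y \in orbitS x) && (y != x) then (#|orbitS x|.-1)%:R^-1 * a x y else 0.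

Definition diagker (a : X -> X -> R) : X -> X -> R := fun x y =>
  if y == x then 1 - \sum_(z : X | z != x) offker a x z else offker a x y.

Definition Mker : X -> X -> R := diagker (fun x y => Num.min 1 (pi y / pi x)).
Definition Bker : X -> X -> R := diagker (fun x y => pi y / (pi x + pi y)).

End Orbits.

(* Main.v *)
Require Import Defs.
From HB Require Import structures.
From mathcomp Require Import all_boot all_order all_algebra.
From mathcomp Require Import boolp classical_sets reals ereal exp.
From mathcomp Require Import ring lra.
Import Order.TTheory GRing.Theory Num.Theory.
Local Open Scope ring_scope.

Section Aux.
Variable R : realType.

Lemma ln_ge1V (u : R) : 0 < u -> 1 - u^-1 <= ln u.
Proof.
move=> u0.
have h := @le_ln1Dx R (u^-1 - 1).
have : -1 < u^-1 - 1 by rewrite ltrBrDr addrC subrr invr_gt0.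
move=> /h; rewrite addrC subrK lnV ?posrE // => H.
lra.
Qed.

Lemma logsum (I : finType) (a b : I -> R) :
  (forall i, 0 <= a i) -> (forall i, 0 <= b i) -> (forall i, a i != 0 -> b i != 0) ->
  (\sum_i a i) * ln ((\sum_i a i) / (\sum_i b i)) <= \sum_i a i * ln (a i / b i).
Proof.
move=> a0 b0 ab.
set A := \sum_i a i; set B := \sum_i b i.
have A0 : 0 <= A by apply: sumr_ge0.
case: (eqVneq A 0) => [A00|An0].
  rewrite A00 mul0r; have := A00 => /eqP; rewrite psumr_eq0 // => /allP H.
  rewrite big1 // => i _; have /eqP -> := H i (mem_index_enum i); by rewrite mul0r.
case: (pickP (fun i => a i != 0)) => [i0 ai0|H]; last first.
  by move: An0; rewrite /A big1 ?eqxx // => i _; move: (H i) => /negbFE/eqP.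
have bi0 : 0 < b i0 by rewrite lt_def ab // b0.
have B0 : 0 < B.
  rewrite /B (bigD1 i0) //=; apply: (lt_le_trans bi0); rewrite lerDl; exact: sumr_ge0.
have Ap : 0 < A by rewrite lt_def An0 A0.
have key : forall i, a i * ln (A / B) + a i - b i * (A / B) <= a i * ln (a i / b i).
  move=> i; case: (eqVneq (a i) 0) => [->|ain0].
    rewrite !mul0r add0r sub0r oppr_le0; apply: mulr_ge0 => //; apply: divr_ge0 => //; exact: ltW.
  have ap : 0 < a i by rewrite lt_def ain0 a0.
  have bp : 0 < b i by rewrite lt_def ab // b0.
  have up : 0 < (a i / b i) / (A / B) by rewrite !divr_gt0.
  have := @ln_ge1V _ up; rewrite ln_div ?posrE ?divr_gt0 // => H.
  have E : a i * (1 - ((a i / b i) / (A / B))^-1) = a i - b i * (A / B).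
    field; rewrite ?gt_eqF //.
  have := ler_wpM2l (ltW ap) H; rewrite E mulrBr; lra.
apply: le_trans (ler_sum _ (fun i _ => key i)).
rewrite !big_split /= -!mulr_suml -/A -/B.
rewrite sumrN -mulr_suml -/B.
have -> : B * (A / B) = A by field; rewrite gt_eqF.
lra.
Qed.

Variable X : finType.
Implicit Types (pi : X -> R) (P Q K : X -> X -> R).

Lemma KL_fin pi P Q : (forall x y, pi x * P x y != 0 -> Q x y != 0) ->
  KLpi pi P Q = (\sum_x \sum_y pi x * P x y * ln (P x y / Q x y))%:E.
Proof.
move=> H; rewrite /KLpi -sumEFin; apply: eq_bigr => x _; rewrite -sumEFin.
apply: eq_bigr => y _; case: eqP => [->|/eqP h]; first by rewrite mul0r.
by rewrite (negbTE (H x y h)).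
Qed.

Lemma KL_inf pi P Q : ~ (forall x y, pi x * P x y != 0 -> Q x y != 0) ->
  KLpi pi P Q = +oo%E.
Proof.
move=> /existsNP [x /existsNP [y /not_implyP [h /negP/negPn q]]].
have tN : forall x y, (if (pi x * P x y == 0)%R then 0%E
      else if (Q x y == 0)%R then +oo%E
      else ((pi x * P x y) * ln (P x y / Q x y))%:E) != -oo%E.
  by move=> x' y'; case: ifP => //; case: ifP.
apply/eqP; rewrite /KLpi esum_eqy; last first.
  move=> x' _; rewrite esum_eqNy; apply/negP => /existsP [y' /andP[_ /eqP e]].
  by move: (tN x' y'); rewrite e.
apply/existsP; exists x; rewrite /= esum_eqy //; apply/existsP; exists y.
by rewrite /= (negbTE h) q.
Qed.

Lemma pos_witness (a : X -> R) : \sum_y a y != 0 -> exists y, a y != 0.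
Proof.
case: (pickP (fun i => a i != 0)) => [i0 ai0|H]; first by exists i0.
by rewrite big1 ?eqxx // => i _; move: (H i) => /negbFE/eqP.
Qed.

Lemma sum_gt_term (a : X -> R) y : (forall y, 0 <= a y) -> 0 < a y -> 0 < \sum_y a y.
Proof.
move=> a0 ay; rewrite (bigD1 y) //=; apply: (lt_le_trans ay); rewrite lerDl.
exact: sumr_ge0.
Qed.

Lemma KL_right pi P Q K : (forall x, 0 < pi x) -> (forall x y, 0 <= P x y) ->
  (forall x y, 0 <= Q x y) -> (forall x y, 0 <= K x y) ->
  (forall x, \sum_y K x y = 1) -> kmul Q K = Q ->
  (KLpi pi (kmul P K) Q <= KLpi pi P Q)%E.
Proof.
move=> pi0 P0 Q0 K0 K1 QK.
case: (pselect (forall x y, pi x * P x y != 0 -> Q x y != 0)) => [H|H]; last first.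
  by rewrite (@KL_inf _ _ _ H) leey.
have EQ : forall x z, Q x z = \sum_y Q x y * K y z by move=> x z; rewrite -{1}QK.
have H2 : forall x z, pi x * kmul P K x z != 0 -> Q x z != 0.
  move=> x z; rewrite mulf_eq0 negb_or => /andP[_ /pos_witness [y]].
  rewrite mulf_eq0 negb_or => /andP[pn kn].
  have q : Q x y != 0 by apply: H; rewrite mulf_neq0 // gt_eqF.
  rewrite EQ gt_eqF //; apply: (@sum_gt_term _ y) => [y'|]; first exact: mulr_ge0.
  by rewrite mulr_gt0 // lt_def ?q ?kn ?Q0 ?K0.
rewrite !KL_fin // lee_fin; apply: ler_sum => x _.
have per : forall z, kmul P K x z * ln (kmul P K x z / Q x z) <=
    \sum_y P x y * K y z * ln (P x y / Q x y).
  move=> z; rewrite EQ; apply: le_trans (logsum _ _ _ _ _ _) _.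
  - by move=> y; apply: mulr_ge0.
  - by move=> y; apply: mulr_ge0.
  - move=> y; rewrite !mulf_eq0 !negb_or => /andP[pn kn].
    by rewrite kn andbT; apply: H; rewrite mulf_neq0 // gt_eqF.
  apply: ler_sum => y _; case: (eqVneq (P x y * K y z) 0) => [->|pk].
    by rewrite !mul0r.
  move: (pk); rewrite mulf_eq0 negb_or => /andP[pn kn].
  have qn : Q x y != 0 by apply: H; rewrite mulf_neq0 // gt_eqF.
  have -> : P x y * K y z / (Q x y * K y z) = P x y / Q x y by field; rewrite qn kn.
  by [].
under eq_bigr do rewrite -mulrA.
under [X in _ <= X]eq_bigr do rewrite -mulrA.
rewrite -!mulr_sumr; apply: ler_wpM2l; first exact: ltW.
apply: le_trans (ler_sum _ (fun z _ => per z)) _.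
rewrite exchange_big /=; apply: ler_sum => y _.
under eq_bigr do rewrite mulrAC.
by rewrite -mulr_sumr K1 mulr1.
Qed.

Lemma KL_left pi P Q K : (forall x, 0 < pi x) -> (forall x y, 0 <= P x y) ->
  (forall x y, 0 <= Q x y) -> (forall x y, 0 <= K x y) ->
  (forall y, \sum_x pi x * K x y = pi y) -> kmul K Q = Q ->
  (KLpi pi (kmul K P) Q <= KLpi pi P Q)%E.
Proof.
move=> pi0 P0 Q0 K0 piK KQ.
case: (pselect (forall x y, pi x * P x y != 0 -> Q x y != 0)) => [H|H]; last first.
  by rewrite (@KL_inf _ _ _ H) leey.
have EQ : forall x z, Q x z = \sum_w K x w * Q w z by move=> x z; rewrite -{1}KQ.
have H2 : forall x z, pi x * kmul K P x z != 0 -> Q x z != 0.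
  move=> x z; rewrite mulf_eq0 negb_or => /andP[_ /pos_witness [w]].
  rewrite mulf_eq0 negb_or => /andP[kn pn].
  have q : Q w z != 0 by apply: H; rewrite mulf_neq0 // gt_eqF.
  rewrite EQ gt_eqF //; apply: (@sum_gt_term _ w) => [y'|]; first exact: mulr_ge0.
  by rewrite mulr_gt0 // lt_def ?q ?kn ?Q0 ?K0.
rewrite !KL_fin // lee_fin.
have per : forall x z, kmul K P x z * ln (kmul K P x z / Q x z) <=
    \sum_w K x w * (P w z * ln (P w z / Q w z)).
  move=> x z; rewrite EQ; apply: le_trans (logsum _ _ _ _ _ _) _.
  - by move=> y; apply: mulr_ge0.
  - by move=> y; apply: mulr_ge0.
  - move=> y; rewrite !mulf_eq0 !negb_or => /andP[kn pn].
    by rewrite kn /=; apply: H; rewrite mulf_neq0 // gt_eqF.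
  apply: ler_sum => w _; case: (eqVneq (K x w * P w z) 0) => [e|pk].
    by rewrite mulrA e !mul0r.
  move: (pk); rewrite mulf_eq0 negb_or => /andP[kn pn].
  have qn : Q w z != 0 by apply: H; rewrite mulf_neq0 // gt_eqF.
  have -> : K x w * P w z / (K x w * Q w z) = P w z / Q w z by field; rewrite qn kn.
  by rewrite mulrA.
apply: (@le_trans _ _ (\sum_x \sum_z pi x * \sum_w K x w * (P w z * ln (P w z / Q w z)))).
  apply: ler_sum => x _; apply: ler_sum => z _; rewrite -mulrA.
  by apply: ler_wpM2l; [exact: ltW | exact: per].
rewrite le_eqVlt; apply/orP; left; apply/eqP.
under eq_bigr do (under eq_bigr do rewrite mulr_sumr; rewrite exchange_big /=).
rewrite exchange_big /=; apply: eq_bigr => w _.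
rewrite exchange_big /=; apply: eq_bigr => z _.
rewrite -piK !mulr_suml; apply: eq_bigr => x _; by rewrite !mulrA.
Qed.


Lemma kmulA P Q K : kmul (kmul P Q) K = kmul P (kmul Q K).
Proof.
apply/funext => x; apply/funext => y; rewrite /kmul.
under eq_bigr do rewrite mulr_suml.
rewrite exchange_big /=; apply: eq_bigr => z _; rewrite mulr_sumr.
by apply: eq_bigr => w _; rewrite mulrA.
Qed.

End Aux.

Section Orb.
Variables (R : realType) (X : finType) (gT : groupType) (act : gT -> X -> X).
Variable pi : X -> R.
Hypothesis hact : is_action act.
Hypothesis pi0 : forall x, 0 < pi x.

Lemma orbP x y : reflect (exists g, act g x = y) (y \in orbitS act x).
Proof. by rewrite inE; apply: (iffP (asboolP _)). Qed.

Lemma orb_refl x : x \in orbitS act x.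
Proof. by apply/orbP; exists 1%g; case: hact. Qed.

Lemma orb_sym {x y} : y \in orbitS act x -> x \in orbitS act y.
Proof.
case: hact => h1 hM.
move/orbP => [g <-]; apply/orbP; exists g^-1%g; by rewrite -hM mulVg h1.
Qed.

Lemma orb_trans {x y z} : y \in orbitS act x -> z \in orbitS act y -> z \in orbitS act x.
Proof.
case: hact => h1 hM.
move/orbP => [g <-] /orbP [h <-]; apply/orbP; exists (h * g)%g; by rewrite hM.
Qed.

Lemma orb_eq {x y} : y \in orbitS act x -> orbitS act y = orbitS act x.
Proof.
move=> yx; apply/setP => z; apply/idP/idP => [zy|zx].
  exact: orb_trans yx zy.
exact: orb_trans (orb_sym yx) zx.
Qed.

Section Good.
Variable M : X -> X -> R.
Hypotheses (M0 : forall x y, 0 <= M x y) (M1 : forall x, \sum_y M x y = 1)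
  (Mrev : forall x y, pi x * M x y = pi y * M y x)
  (Msupp : forall x y, M x y != 0 -> y \in orbitS act x).

Lemma Msupp0 x y : y \notin orbitS act x -> M x y = 0.
Proof. by move=> h; apply/eqP; apply: contraNT h; apply: Msupp. Qed.

Lemma GM : kmul (Gker act pi) M = Gker act pi.
Proof.
apply/funext => x; apply/funext => z; rewrite /kmul /Gker.
set Z := \sum_(w in orbitS act x) pi w.
case: (boolP (z \in orbitS act x)) => zx.
  have Oz := orb_eq zx.
  rewrite -[RHS]mulr1 -(M1 z) mulr_sumr; apply: eq_bigr => y _.
  case: ifP => yx.
    by rewrite mulrAC Mrev mulrAC.
  by rewrite mul0r Msupp0 ?mulr0 // Oz yx.
apply: big1 => y _; case: ifP => yx; last by rewrite mul0r.
rewrite Msupp0 ?mulr0 //; apply: contra zx => zy.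
by rewrite -(orb_eq yx).
Qed.

Lemma MG : kmul M (Gker act pi) = Gker act pi.
Proof.
apply/funext => x; apply/funext => z; rewrite /kmul.
rewrite -[RHS]mul1r -(M1 x) mulr_suml; apply: eq_bigr => y _.
case: (eqVneq (M x y) 0) => [->|h]; first by rewrite !mul0r.
by rewrite /Gker (orb_eq (Msupp _ _ h)).
Qed.

Lemma piM y : \sum_x pi x * M x y = pi y.
Proof.
under eq_bigr do rewrite Mrev.
by rewrite -mulr_sumr M1 mulr1.
Qed.

Lemma QM_MQ Q : kmul (kmul (Gker act pi) Q) (Gker act pi) = Q ->
  kmul Q M = Q /\ kmul M Q = Q.
Proof.
move=> QG.
have QG' : kmul (Gker act pi) (kmul Q (Gker act pi)) = Q by rewrite -kmulA.
split.
  by rewrite -{1}QG' !kmulA GM QG'.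
by rewrite -QG' -!kmulA MG.
Qed.
Lemma good_KL (P Q : X -> X -> R) : (forall x y, 0 <= P x y) -> (forall x y, 0 <= Q x y) ->
  kmul (kmul (Gker act pi) Q) (Gker act pi) = Q ->
  (KLpi pi (kmul P M) Q <= KLpi pi P Q)%E /\ (KLpi pi (kmul M P) Q <= KLpi pi P Q)%E.
Proof.
move=> P0 Q0 QG; have [h1 h2] := QM_MQ _ QG; split.
  exact: KL_right.
apply: KL_left => //; exact: piM.
Qed.
End Good.

Section Diag.
Variable a : X -> X -> R.
Hypotheses (a0 : forall x y, 0 <= a x y) (a1 : forall x y, a x y <= 1)
  (asym : forall x y, pi x * a x y = pi y * a y x).

Let c x : R := (#|orbitS act x|.-1)%:R^-1.

Lemma c0 x : 0 <= c x.
Proof. by rewrite invr_ge0 ler0n. Qed.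

Lemma off0 x y : 0 <= offker act a x y.
Proof. rewrite /offker; case: ifP => // _; exact: mulr_ge0 (c0 x) (a0 x y). Qed.

Lemma off_sum x : \sum_(z | z != x) offker act a x z <= 1.
Proof.
apply: (@le_trans _ _ (\sum_(z | z != x) (if z \in orbitS act x then c x else 0))).
  apply: ler_sum => z zx; rewrite /offker zx andbT; case: ifP => // _.
  exact: ler_piMr (c0 x) (a1 x z).
rewrite -big_mkcondr /=.
rewrite (eq_bigl (fun z => z \in orbitS act x :\ x)); last first.
  by move=> z; rewrite in_setD1.
rewrite sumr_const /c.
have -> : #|orbitS act x|.-1 = #|orbitS act x :\ x|.
  by rewrite (cardsD1 x (orbitS act x)) orb_refl.
case: (#|orbitS act x :\ x|) => [|m]; first by rewrite mulr0n.
by rewrite -[_ *+ m.+1]mulr_natr mulVf // pnatr_eq0.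
Qed.

Lemma D0 x y : 0 <= diagker act a x y.
Proof.
rewrite /diagker; case: ifP => _; last exact: off0.
by rewrite subr_ge0 off_sum.
Qed.

Lemma D1 x : \sum_y diagker act a x y = 1.
Proof.
rewrite (bigD1 x) //= {1}/diagker eqxx.
rewrite (eq_bigr (fun y => offker act a x y)); last by move=> y yx; rewrite /diagker (negbTE yx).
by rewrite subrK.
Qed.

Lemma Dsupp x y : diagker act a x y != 0 -> y \in orbitS act x.
Proof.
rewrite /diagker; case: (eqVneq y x) => [-> _|_]; first exact: orb_refl.
by rewrite /offker; case: ifP => [/andP[] //|]; rewrite eqxx.
Qed.

Lemma Drev x y : pi x * diagker act a x y = pi y * diagker act a y x.
Proof.
rewrite /diagker; case: (eqVneq y x) => [->//|yx].
have xy : x != y by rewrite eq_sym.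
rewrite /offker yx xy !andbT.
case: (boolP (y \in orbitS act x)) => yo.
  rewrite (orb_sym yo) /c (orb_eq yo).
  by rewrite mulrCA asym mulrCA.
have xo : x \notin orbitS act y by apply: contra yo; exact: orb_sym.
by rewrite (negbTE xo) !mulr0.
Qed.
End Diag.

Lemma Ma0 x y : 0 <= Num.min 1 (pi y / pi x).
Proof. by rewrite le_min ler01 divr_ge0 // ltW. Qed.
Lemma Ma1 x y : Num.min 1 (pi y / pi x) <= 1.
Proof. by rewrite ge_min lexx. Qed.
Lemma Masym x y : pi x * Num.min 1 (pi y / pi x) = pi y * Num.min 1 (pi x / pi y).
Proof.
rewrite !minr_pMr ?ltW // !mulr1.
have e1 : pi x * (pi y / pi x) = pi y by field; rewrite gt_eqF.
have e2 : pi y * (pi x / pi y) = pi x by field; rewrite gt_eqF.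
by rewrite e1 e2 minC.
Qed.
Lemma Ba0 x y : 0 <= pi y / (pi x + pi y).
Proof. by rewrite divr_ge0 ?addr_ge0 ?ltW. Qed.
Lemma Ba1 x y : pi y / (pi x + pi y) <= 1.
Proof. by rewrite ler_pdivrMr ?addr_gt0 // mul1r -subr_ge0 addrK ltW. Qed.
Lemma Basym x y : pi x * (pi y / (pi x + pi y)) = pi y * (pi x / (pi y + pi x)).
Proof. by rewrite [pi y + _]addrC !mulrA [pi x * _]mulrC. Qed.


Lemma main_in P Q : Spi pi P -> Spi pi Q ->
  kmul (kmul (Gker act pi) Q) (Gker act pi) = Q ->
  [/\ (KLpi pi (kmul P (Mker act pi)) Q <= KLpi pi P Q)%E,
      (KLpi pi (kmul P (Bker act pi)) Q <= KLpi pi P Q)%E,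
      (KLpi pi (kmul (Mker act pi) P) Q <= KLpi pi P Q)%E &
      (KLpi pi (kmul (Bker act pi) P) Q <= KLpi pi P Q)%E].
Proof.
move=> [[P0 _] _] [[Q0 _] _] QG.
have [m1 m2] : (KLpi pi (kmul P (Mker act pi)) Q <= KLpi pi P Q)%E /\
   (KLpi pi (kmul (Mker act pi) P) Q <= KLpi pi P Q)%E.
  apply: good_KL => //.
  - by move=> x y; apply: D0 => *; solve [exact: Ma0 | exact: Ma1 | exact: Masym].
  - by move=> x; apply: D1 => *; solve [exact: Ma0 | exact: Ma1 | exact: Masym].
  - by move=> x y; apply: Drev => *; solve [exact: Ma0 | exact: Ma1 | exact: Masym].
  - by move=> x y; apply: Dsupp.
have [b1 b2] : (KLpi pi (kmul P (Bker act pi)) Q <= KLpi pi P Q)%E /\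
   (KLpi pi (kmul (Bker act pi) P) Q <= KLpi pi P Q)%E.
  apply: good_KL => //.
  - by move=> x y; apply: D0 => *; solve [exact: Ba0 | exact: Ba1 | exact: Basym].
  - by move=> x; apply: D1 => *; solve [exact: Ba0 | exact: Ba1 | exact: Basym].
  - by move=> x y; apply: Drev => *; solve [exact: Ba0 | exact: Ba1 | exact: Basym].
  - by move=> x y; apply: Dsupp.
by split.
Qed.
End Orb.

Theorem proposition5p4 (R : realType) (X : finType) (gT : groupType)
  (act : gT -> X -> X) (pi : X -> R) :
  is_action act ->
  (forall x, 0 < pi x) -> \sum_(x : X) pi x = 1 ->
  forall P Q : X -> X -> R,
  Spi pi P -> Spi pi Q ->
  kmul (kmul (Gker act pi) Q) (Gker act pi) = Q ->
  [/\ (KLpi pi (kmul P (Mker act pi)) Q <= KLpi pi P Q)%E,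
      (KLpi pi (kmul P (Bker act pi)) Q <= KLpi pi P Q)%E,
      (KLpi pi (kmul (Mker act pi) P) Q <= KLpi pi P Q)%E &
      (KLpi pi (kmul (Bker act pi) P) Q <= KLpi pi P Q)%E].
Proof.
move=> hact pi0 _ P Q; exact: main_in.
Qed.
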